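(* Let $x$ be a point in a model $M$. The following are equivalent: (1) $x$ is separated; (2) there exists a $(\wedge,\to)$-formula $\varphi$ such that $x$ is a $\varphi$-border point, i.e. $x\not\models\varphi$ while every $y>x$ satisfies $\varphi$.
   Context: Fix $n\ge 1$ and propositional variables $p_1,\dots,p_n$; $2^n=\{0,1\}^n$ with componentwise order. A model is $(M,\le,c)$ with $(M,\le)$ a poset and $c:M\to 2^n$ order-preserving, with the usual intuitionistic Kripke semantics ($x\models p_i$ iff $c(x)_i=1$; $x\models\varphi\to\psi$ iff for all $y\ge x$, $y\models\varphi$ implies $y\models\psi$; etc.). Write $v(\varphi)=\{x: x\models\varphi\}$. A $(\wedge,\to)$-formula is a formula built from $p_1,\dots,p_n$ using only $\wedge$ and $\to$. For an up-set $A$, a border point of $A$ is a maximal element of $M\setminus A$; $x$ is a $\varphi$-border point if it is a border point of $v(\varphi)$. A point is separated if it is a $q$-border point for some propositional variable $q$. *)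

(* Defs.v *)
From mathcomp Require Import all_boot.
Set Implicit Arguments. Unset Strict Implicit. Unset Printing Implicit Defensive.

(* Propositional formulas over the variables p_0, ..., p_{n-1}
   (the paper's p_1..p_n). *)
Inductive formula (n : nat) : Type :=
  | Var : 'I_n -> formula n
  | Bot : formula n
  | And : formula n -> formula n -> formula n
  | Or  : formula n -> formula n -> formula n
  | Imp : formula n -> formula n -> formula n.
Arguments Bot {n}.

Fixpoint andimp_formula n (f : formula n) : Prop :=
  match f with
  | Var _ => True
  | Bot => False
  | And a b => andimp_formula a /\ andimp_formula b
  | Or _ _ => False
  | Imp a b => andimp_formula a /\ andimp_formula b
  end.

(* A model (M, <=, c): a poset with an order-preserving colouring
   c : M -> 2^n (an element of 2^n is a function 'I_n -> bool,
   ordered componentwise). *)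
Record model (n : nat) := Model {
  carrier :> Type;
  le : carrier -> carrier -> Prop;
  le_refl : forall x, le x x;
  le_trans : forall x y z, le x y -> le y z -> le x z;
  le_antisym : forall x y, le x y -> le y x -> x = y;
  col : carrier -> 'I_n -> bool;
  col_mono : forall x y i, le x y -> col x i -> col y i
}.

Fixpoint forces n (M : model n) (x : M) (f : formula n) : Prop :=
  match f with
  | Var i => col x i = true
  | Bot => False
  | And a b => forces x a /\ forces x b
  | Or a b => forces x a \/ forces x b
  | Imp a b => forall y : M, le x y -> forces y a -> forces y b
  end.

Definition v n (M : model n) (f : formula n) : M -> Prop := fun x => forces x f.

Definition border_point n (M : model n) (A : M -> Prop) (x : M) : Prop :=
  ~ A x /\ forall y : M, le x y -> ~ A y -> y = x.

Definition phi_border_point n (M : model n) (f : formula n) (x : M) : Prop :=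
  border_point (v f) x.

Definition separated n (M : model n) (x : M) : Prop :=
  exists i : 'I_n, phi_border_point (Var i) x.

(* Main.v *)
Require Import Defs.
From mathcomp Require Import all_boot.
From Stdlib Require Import Classical.

Lemma forces_mono n (M : model n) (f : formula n) :
  forall (x y : M), le x y -> forces x f -> forces y f.
Proof.
elim: f => [i||a IHa b IHb|a IHa b IHb|a IHa b IHb] x y Hxy /=.
- by move=> H; apply: (col_mono Hxy); rewrite H.
- by [].
- by move=> [Ha Hb]; split; [apply: IHa Hxy Ha | apply: IHb Hxy Hb].
- by case=> H; [left; apply: IHa Hxy H | right; apply: IHb Hxy H].
- move=> H z Hyz Hz; apply: H => //; exact: le_trans Hxy Hyz.
Qed.

Lemma border_sep n (M : model n) (f : formula n) :
  andimp_formula f -> forall x : M, phi_border_point f x -> separated x.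
Proof.
elim: f => [i||a IHa b IHb|a IHa b IHb|a IHa b IHb] /= Hf x [Hx Hmax].
- by exists i; split.
- by [].
- case: Hf => Ha Hb.
  case: (classic (forces x a)) => Hxa.
  + apply: IHb => //; split.
    * by move=> Hxb; apply: Hx; split.
    * move=> y Hxy Hyb; apply: Hmax => //; by case.
  + apply: IHa => //; split => //.
    move=> y Hxy Hya; apply: Hmax => //; by case.
- by [].
- case: Hf => Ha Hb.
  have [y [Hxy [Hya Hyb]]] : exists y, le x y /\ forces y a /\ ~ forces y b.
    apply: NNPP => Hn; apply: Hx => y Hxy Hya.
    apply: NNPP => Hyb; apply: Hn; by exists y.
  have Hyx : y = x.
    apply: Hmax => // H; apply: Hyb; apply: H => //; exact: le_refl.
  subst y.
  apply: IHb => //; split => //.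
  move=> z Hxz Hzb; apply: Hmax => // H; apply: Hzb; apply: H.
  + exact: le_refl.
  + exact: forces_mono Hxz Hya.
Qed.

Theorem lemma3p4 (n : nat) (Hn : 0 < n) (M : model n) (x : M) :
  separated x <->
  exists f : formula n, andimp_formula f /\ phi_border_point f x.
Proof.
split.
- by case=> i H; exists (Var i); split.
- by case=> f [Hf H]; exact: border_sep Hf x H.
Qed.
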